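(* Consider the private information delivery (PID) problem with $K$ messages, $N\ge\lceil K/M\rceil$ servers and $M$ messages stored per server, where $1\le M\le K$ and $K/M\notin\mathbb{Z}$. Then (i) if $N \geq \frac{K}{\gcd(K,M)} - \left(\frac{M}{\gcd(K,M)}-1\right)\left(\lfloor K/M \rfloor - 1\right)$, the rate $M/K$ is achievable, so that $C=M/K$; and (ii) if $N=\lceil K/M\rceil$, then every achievable rate is at most $1/\lceil K/M\rceil$, so that $C=1/\lceil K/M\rceil$.
   Context: The PID problem with parameters $(K,N,M)$: There are $K$ independent messages $W_1,\dots,W_K$, each consisting of $L$ i.i.d. uniform symbols from a finite field $\mathbb{F}_p$, so that (in $p$-ary units) $H(W_k)=L$ for all $k$ and $H(W_1,\dots,W_K)=\sum_k H(W_k)$. There are $N$ servers; server $n$ stores $S_n=\{W_k : k\in\mathcal{S}_n\}$ for some $\mathcal{S}_n\subset\{1,\dots,K\}$ with $|\mathcal{S}_n|=M$ (a design choice). The servers share a common random variable $Z$ independent of the messages. For each $k\in\{1,\dots,K\}$, server $n$ sends an answer $A_n^{[k]}$ that is a deterministic function of $(S_n,Z)$ and consists of $D_n$ symbols of $\mathbb{F}_p$ ($D_n$ independent of $k$). Correctness: $H(W_k\mid A_1^{[k]},\dots,A_N^{[k]})=0$ for all $k$. Privacy: for all $k$, $(A_1^{[1]},\dots,A_N^{[1]},W_1)$ and $(A_1^{[k]},\dots,A_N^{[k]},W_k)$ are identically distributed. The rate is $R=L/\sum_n D_n$; a rate is achievable if some scheme (choice of $L$, $p$, storage sets, $Z$,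 answer functions) satisfying these constraints has rate at least $R$; the capacity $C$ is the supremum of achievable rates over all storage designs and schemes. It is known that $1/\lceil K/M\rceil\le C\le M/K$ whenever $N\ge\lceil K/M\rceil$. *)

(* Defs.v *)
From HB Require Import structures.
From mathcomp Require Import all_boot all_order all_algebra.
From mathcomp Require Import reals exp.
Set Implicit Arguments. Unset Strict Implicit. Unset Printing Implicit Defensive.
Import Order.TTheory GRing.Theory Num.Theory.
Local Open Scope ring_scope.

Section Prob.
Variable R : realType.

Definition Pr (Om : finType) (P : Om -> R) (E : pred Om) : R :=
  \sum_(w : Om | E w) P w.

(* conditional entropy H(X | Y) = E[ - log P(X | Y) ] (natural log; the
   base only rescales, and only the condition H = 0 is used) *)
Definition condH (Om : finType) (P : Om -> R) (A B : eqType)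
    (X : Om -> A) (Y : Om -> B) : R :=
  - \sum_(w : Om) P w *
      ln (Pr P (fun w' => (X w' == X w) && (Y w' == Y w)) /
          Pr P (fun w' => Y w' == Y w)).

Definition ident_distr (Om : finType) (P : Om -> R) (A : eqType)
    (X Y : Om -> A) : Prop :=
  forall a : A, Pr P (fun w => X w == a) = Pr P (fun w => Y w == a).
End Prob.

Definition cdiv (K M : nat) : nat := (K + M.-1) %/ M.

Definition msgs (p K L : nat) := {ffun 'I_K -> 'rV['F_p]_L}.

Definition answers (p N : nat) (D : 'I_N -> nat) :=
  {dffun forall n : 'I_N, 'rV['F_p]_(D n)}.

(* A PID scheme for parameters (K,N,M) achieving rate at least r:
   field F_p (p prime), message length L, storage sets S_n with |S_n| = M,
   common randomness Z on a finite set T with pmf PZ (independent of the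
   uniformly distributed messages), answer lengths D_n, answer functions
   ans k n depending only on (S_n, Z); sample space msgs * T. *)
Definition achievable (R : realType) (K N M : nat) (r : R) : Prop :=
  exists (p L : nat) (S : 'I_N -> {set 'I_K}) (T : finType) (PZ : T -> R)
         (D : 'I_N -> nat)
         (ans : forall (k : 'I_K) (n : 'I_N), msgs p K L -> T -> 'rV['F_p]_(D n)),
    let P : (msgs p K L * T)%type -> R :=
      fun w => PZ w.2 / #|{: msgs p K L}|%:R in
    let A : 'I_K -> (msgs p K L * T)%type -> answers p D :=
      fun k w => [ffun n => ans k n w.1 w.2] in
    [/\ prime p,
        forall n, #|S n| = M,
        (forall z, 0 <= PZ z) /\ \sum_(z : T) PZ z = 1,
        (forall k n (w w' : msgs p K L) z,
            (forall j, j \in S n -> w j = w' j) -> ans k n w z = ans k n w' z) &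
        [/\
        (forall k, condH P (fun w => w.1 k) (A k) = 0),
        (forall k k', ident_distr P (fun w => (A k w, w.1 k))
                                    (fun w => (A k' w, w.1 k'))) &
        r <= L%:R / (\sum_(n : 'I_N) D n)%:R]].

Definition is_capacity (R : realType) (K N M : nat) (C : R) : Prop :=
  achievable K N M C /\ forall r : R, achievable K N M r -> r <= C.

(* Main.v *)
Require Import Defs.
From HB Require Import structures.
From mathcomp Require Import all_boot all_order all_algebra.
From mathcomp Require Import reals exp.
From mathcomp Require Import zify.
Set Implicit Arguments. Unset Strict Implicit. Unset Printing Implicit Defensive.
Import Order.TTheory GRing.Theory Num.Theory.
Local Open Scope ring_scope.


Lemma condH0_det (R : realType) (Om : finType) (P : Om -> R) (A B : eqType)
  (X : Om -> A) (Y : Om -> B) :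
  (forall w, 0 <= P w) -> condH P X Y = 0 ->
  forall w w', 0 < P w -> 0 < P w' -> Y w = Y w' -> X w = X w'.
Proof.
move=> P0 H0 w w' Pw Pw' eY.
pose a v := Pr P (fun w' => (X w' == X v) && (Y w' == Y v)).
pose b v := Pr P (fun w' => Y w' == Y v).
pose c v := \sum_(w' | (Y w' == Y v) && ~~ (X w' == X v)) P w'.
have bac v : b v = a v + c v.
  rewrite /b /Pr (bigID (fun w' => X w' == X v)) /=; congr (_ + _).
  by apply: eq_bigl => u; rewrite andbC.
have c0 v : 0 <= c v by apply: sumr_ge0.
have a0 v : 0 <= a v by apply: sumr_ge0.
have f0 v : 0 <= - (P v * ln (a v / b v)).
  rewrite oppr_ge0 mulr_ge0_le0 // ln_le0 //.
  have [b0|bn0] := eqVneq (b v) 0; first by rewrite b0 invr0 mulr0 ler01.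
  have bp : 0 < b v by rewrite lt_def bn0 bac addr_ge0.
  by rewrite ler_pdivrMr // mul1r bac lerDl.
have Hs : \sum_(v in Om) - (P v * ln (a v / b v)) = 0.
  by rewrite sumrN; exact: H0.
have /(_ w isT) := psumr_eq0P (fun v _ => f0 v) Hs.
move/eqP; rewrite oppr_eq0 mulf_eq0 (gt_eqF Pw) /=.
have ap : 0 < a w.
  apply: (lt_le_trans Pw); rewrite /a /Pr (bigD1 w) ?eqxx //= lerDl.
  by apply: sumr_ge0.
have bp : 0 < b w by rewrite bac ltr_wpDr.
rewrite ln_eq0 ?divr_gt0 // => /eqP/(congr1 (fun t => t * b w)).
rewrite mul1r mulfVK ?gt_eqF // bac => /eqP; rewrite -subr_eq0 opprD addrA subrr add0r oppr_eq0 => /eqP cw.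
apply/eqP; apply: contraT => ne.
have := psumr_eq0P (fun v _ => P0 v) cw (i:=w').
rewrite eY eqxx eq_sym ne => /(_ isT) Pw'0.
by move: Pw'; rewrite Pw'0 ltxx.
Qed.

Lemma card_fam (aT : finType) (rT : aT -> finType) (F : forall x, pred (rT x)) :
 #|(family F : simpl_pred {dffun forall x : aT, rT x})| = (\prod_(y : aT) #|F y|)%N.
Proof. by rewrite card_family foldrE big_map big_enum. Qed.

Lemma ach_bound (R : realType) (K N M : nat) (r : R) : achievable K N M r ->
  exists (L : nat) (S : 'I_N -> {set 'I_K}) (D : 'I_N -> nat),
  [/\ forall n, #|S n| = M, forall k, (L <= \sum_(n | k \in S n) D n)%N &
      r <= L%:R / (\sum_n D n)%:R].
Proof.
move=> [p [L [S [T [PZ [D [ans H]]]]]]].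
move: H; set P := (fun w => _ : R); set A := (fun k w => _ : answers p D).
case=> pp cS [PZ0 PZ1] loc [corr _ rate].
exists L, S, D; split => // k.
have [z Pz] : exists z, 0 < PZ z.
  apply/existsP; apply: contraT; rewrite negb_exists => /forallP H.
  have : \sum_(z : T) PZ z = 0.
    by apply: big1 => z _; apply/eqP; rewrite eq_le PZ0 andbT leNgt H.
  by rewrite PZ1 => /eqP; rewrite oner_eq0.
pose w0 : msgs p K L := [ffun => 0].
pose upd (x : 'rV['F_p]_L) : msgs p K L := [ffun j => if j == k then x else w0 j].
pose g x := A k (upd x, z).
have Pp w : 0 <= P w by rewrite /P divr_ge0.
have gi : injective g.
  move=> x1 x2 e.
  have := condH0_det Pp (corr k) (w := (upd x1, z)) (w' := (upd x2, z)).
  rewrite /P /= !ffunE eqxx; apply => //; rewrite divr_gt0 // ltr0n; apply/card_gt0P; by exists w0.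
pose F := fun n => if k \in S n then predT else pred1 (A k (w0, z) n).
have sub : [set g x | x in [set: 'rV['F_p]_L]] \subset (family F : simpl_pred (answers p D)).
  apply/subsetP => y /imsetP[x _ ->]; apply/familyP => n.
  rewrite /F; case: ifP => // kn; rewrite inE /g /A !ffunE /=; apply/eqP.
  apply: loc => j jn; rewrite ffunE; case: eqP => // jk.
  by move: kn; rewrite -jk jn.
have := subset_leq_card sub; rewrite card_imset // cardsT card_mx card_Fp // mul1n card_fam => H.
rewrite big_mkcond -(leq_exp2l _ _ (prime_gt1 pp)) expn_sum; apply: (leq_trans H).
rewrite leq_eqVlt; apply/orP; left; apply/eqP; apply: eq_bigr => n _.
rewrite /F; case: ifP => _.
  by rewrite cardT /= -cardT card_mx card_Fp // mul1n.
by rewrite expn0 card1.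
Qed.


Lemma rate_le (R : realType) (L T a b : nat) (r : R) : (0 < b)%N -> (L * b <= a * T)%N ->
  r <= L%:R / T%:R -> r <= a%:R / b%:R.
Proof.
move=> b0 H rl; apply: (le_trans rl).
have [T0|T0] := posnP T.
  by rewrite T0 invr0 mulr0 divr_ge0.
rewrite ler_pdivrMr ?ltr0n // mulrAC ler_pdivlMr ?ltr0n // -!natrM ler_nat.
exact H.
Qed.

Lemma conv_MK (R : realType) (K N M : nat) (r : R) : (0 < K)%N ->
  achievable K N M r -> r <= M%:R / K%:R.
Proof.
move=> K0 /ach_bound[L [S [D [cS Hk rl]]]].
apply: (rate_le K0 _ rl).
have : (\sum_(k < K) L <= \sum_(k < K) \sum_(n | k \in S n) D n)%N by apply: leq_sum.
rewrite sum_nat_const card_ord => H; rewrite mulnC; apply: (leq_trans H).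
rewrite (exchange_big_dep xpredT) //= big_distrr /= leq_eqVlt; apply/orP; left; apply/eqP; apply: eq_bigr => n _.
by rewrite sum_nat_const cS.
Qed.

Lemma conv_c (R : realType) (K N M : nat) (r : R) : (0 < K)%N -> (0 < M)%N ->
  N = cdiv K M -> achievable K N M r -> r <= 1 / N%:R.
Proof.
move=> K0 M0 eN /ach_bound[L [S [D [cS Hk rl]]]].
have N0 : (0 < N)%N.
  rewrite eN /cdiv divn_gt0 //; lia.
apply: (rate_le (a:=1) N0 _ rl); rewrite mul1n.
have NM : ((N.-1) * M < K)%N.
  have := leq_divM (K + M.-1) M; rewrite -/(cdiv K M) -eN => h.
  rewrite -(prednK N0) mulSn in h; lia.
have ex n : [exists k, [forall m, (m != n) ==> (k \notin S m)]].
  apply: contraT; rewrite negb_exists => /forallP H.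
  have : (\sum_(k < K) 1 <= \sum_(k < K) \sum_(m | m != n) (k \in S m))%N.
    apply: leq_sum => k _; move: (H k); rewrite negb_forall => /existsP[m].
    rewrite negb_imply negbK => /andP[mn km].
    by rewrite (bigD1 m) //= km.
  rewrite sum_nat_const card_ord muln1 exchange_big /=.
  rewrite (eq_bigr (fun _ => M)); last first.
    by move=> m _; rewrite -big_mkcond /= sum1_card cS.
  rewrite sum_nat_const.
  have -> : #|[pred m : 'I_N | m != n]| = N.-1.
    by rewrite -[N in N.-1]card_ord -(cardC1 n); apply: eq_card.
  by rewrite leqNgt NM.
have : (\sum_(n < N) L <= \sum_(n < N) D n)%N.
  apply: leq_sum => n _; have /existsP[k /forallP Hkn] := ex n.
  apply: (leq_trans (Hk k)); rewrite big_mkcond (bigD1 n) //= big1 ?addn0.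
    by case: ifP.
  by move=> m mn; have := Hkn m; rewrite mn /= => /negbTE ->.
by rewrite sum_nat_const card_ord mulnC.
Qed.


Notation Idx N D := {n : 'I_N & 'I_(D n)}.

Definition Qf p L N (D : 'I_N -> nat) (x : Idx N D -> 'F_p) (f : Idx N D -> 'F_p)
  : 'rV['F_p]_L := \row_(l < L) \sum_i x i ^+ l * f i.

Definition Vm p L N (D : 'I_N -> nat) (x : Idx N D -> 'F_p) (pos : 'I_L -> Idx N D)
  : 'M['F_p]_L := Vandermonde L (\row_m x (pos m)).

Definition Ef p L N (D : 'I_N -> nat) (x : Idx N D -> 'F_p) (pos : 'I_L -> Idx N D)
  (y : 'rV['F_p]_L) : Idx N D -> 'F_p :=
  fun i => \sum_(m | pos m == i) (y *m invmx (Vm x pos)^T) 0 m.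

Lemma Qf_ext p L N D x (f g : Idx N D -> 'F_p) : (forall i, f i = g i) ->
  Qf L x f = Qf L x g.
Proof. by move=> e; apply/rowP => l; rewrite !mxE; apply: eq_bigr => i _; rewrite e. Qed.

Lemma QfD p L N D x (f g : Idx N D -> 'F_p) :
  Qf L x (fun i => f i + g i) = Qf L x f + Qf L x g.
Proof. by apply/rowP => l; rewrite !mxE -big_split; apply: eq_bigr => i _; rewrite mulrDr. Qed.

Lemma QfN p L N D x (f : Idx N D -> 'F_p) :
  Qf L x (fun i => - f i) = - Qf L x f.
Proof. by apply/rowP => l; rewrite !mxE -sumrN; apply: eq_bigr => i _; rewrite mulrN. Qed.

Lemma Vm_unit p L N D x pos : injective x -> injective pos ->
  @Vm p L N D x pos \in unitmx.
Proof.
move=> xi pi; rewrite unitmxE /Vm det_Vandermonde unitfE.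
rewrite prodf_seq_neq0; apply/allP => i _; apply/implyP => _.
rewrite prodf_seq_neq0; apply/allP => j _; apply/implyP => ij.
rewrite !mxE subr_eq0; apply/negP => /eqP/xi/pi e.
by move: ij; rewrite e ltnn.
Qed.

Lemma QE p L N D x pos (y : 'rV['F_p]_L) : injective x -> injective pos ->
  Qf L x (@Ef p L N D x pos y) = y.
Proof.
move=> xi pi; set c := y *m invmx (Vm x pos)^T.
have -> : Qf L x (Ef x pos y) = c *m (Vm x pos)^T.
  apply/rowP => l; rewrite !mxE.
  under eq_bigr do rewrite /Ef big_distrr /=.
  rewrite (exchange_big_dep xpredT) //=; apply: eq_bigr => m _.
  rewrite (big_pred1 (pos m)); last by move=> i; rewrite eq_sym.
  by rewrite !mxE mulrC.
by rewrite /c -mulmxA mulVmx ?mulmx1 // unitmx_tr Vm_unit.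
Qed.


Lemma condH_det0 (R : realType) (Om : finType) (P : Om -> R) (A B : eqType)
  (X : Om -> A) (Y : Om -> B) (f : B -> A) :
  (forall w, X w = f (Y w)) -> condH P X Y = 0.
Proof.
move=> XY; rewrite /condH big1 ?oppr0 // => w _.
have -> : Pr P (fun w' => (X w' == X w) && (Y w' == Y w)) = Pr P (fun w' => Y w' == Y w).
  apply: eq_bigl => w'; case: (Y w' =P Y w) => e; rewrite ?andbF // andbT !XY e eqxx //.
set b := Pr P (fun w' => Y w' == Y w); have [->|b0] := eqVneq b 0.
  by rewrite mul0r ln0 ?mulr0.
by rewrite mulfV // ln1 mulr0.
Qed.

Lemma Ef_out p L N (D : 'I_N -> nat) (K : nat) (S : 'I_N -> {set 'I_K}) x
  (pos : 'I_L -> Idx N D) (k : 'I_K) y n (j : 'I_(D n)) :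
  (forall m, k \in S (tag (pos m))) -> k \notin S n ->
  @Ef p L N D x pos y (Tagged (fun n => 'I_(D n)) j) = 0.
Proof.
move=> Hp kn; rewrite /Ef big1 // => m /eqP e.
by move: (Hp m) kn; rewrite e /= => ->.
Qed.

Definition swp (K : nat) (k k' j : 'I_K) : 'I_K :=
  if j == k then k' else if j == k' then k else j.

Lemma swpK K (k k' : 'I_K) : involutive (swp k k').
Proof.
move=> j; rewrite /swp; case: (eqVneq j k) => [->|jk].
  by rewrite eqxx; case: eqP.
case: (eqVneq j k') => [->|jk']; first by rewrite eqxx.
by rewrite (negbTE jk) (negbTE jk').
Qed.

Lemma swpR K (k k' : 'I_K) : swp k k' k' = k.
Proof. by rewrite /swp; case: eqP => [->|_] //; rewrite eqxx. Qed.

Lemma alg_id (F : zmodType) (a b c d : F) : a + (c - d) = b + (c + (a - b) - d).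
Proof. by rewrite -[LHS](subrKC b); congr (b + _); rewrite addrAC [c + (a - b)]addrC addrA. Qed.

Lemma lin_ach (R : realType) (K N M p L : nat) (S : 'I_N -> {set 'I_K})
  (D : 'I_N -> nat) (x : Idx N D -> 'F_p) (pos : 'I_K -> 'I_L -> Idx N D) :
  prime p -> (0 < K)%N -> (forall n, #|S n| = M) -> injective x ->
  (forall k, injective (pos k)) -> (forall k m, k \in S (tag (pos k m))) ->
  achievable K N M (L%:R / (\sum_n D n)%:R : R).
Proof.
move=> pp K0 cS xi pi Sp.
pose k0 : 'I_K := Ordinal K0.
pose T := {ffun Idx N D -> 'F_p}.
pose E k y := @Ef p L N D x (pos k) y.
pose s (u : T) i := u i - E k0 (Qf L x u) i.
pose ans k n (w : msgs p K L) (u : T) : 'rV['F_p]_(D n) :=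
  \row_(j < D n) ((if k \in S n then E k (w k) (Tagged _ j) else 0) + s u (Tagged _ j)).
have ansE k n w u j : ans k n w u 0 j = E k (w k) (Tagged _ j) + s u (Tagged _ j).
  rewrite mxE; case: ifP => // /negbT kn.
  by rewrite /E (Ef_out x (w k) j (Sp k) kn) add0r.
exists p, L, S, T, (fun _ => 1 / #|T|%:R), D, ans.
have T0 : (0 < #|T|)%N by apply/card_gt0P; exists [ffun => 0].
have QS u : Qf L x (s u) = 0.
  have -> : Qf L x (s u) = Qf L x (fun i => u i + - E k0 (Qf L x u) i) by apply: Qf_ext.
  by rewrite QfD QfN /E QE // subrr.
split => //.
- split => [z|]; first by rewrite divr_ge0.
  rewrite sumr_const; change (1 / #|T|%:R *+ #|T| = 1 :> R); rewrite -mulr_natr mul1r mulVf // pnatr_eq0 -lt0n //.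
- move=> k n w w' z H; apply/rowP => j; rewrite !mxE; case: ifP => // kn.
  by rewrite H.
split => //.
- move=> k; apply: (@condH_det0 _ _ _ _ _ _ _ (fun a : answers p D =>
      Qf L x (fun i => a (tag i) 0 (tagged i)))) => -[w u] /=.
  have -> : Qf L x (fun i => [ ffun n : 'I_N => ans k n w u] (tag i) 0 (tagged i)) = Qf L x (fun i => E k (w k) i + s u i).
    by apply: Qf_ext; case=> n j; rewrite ffunE ansE.
  by rewrite QfD QS addr0 /E QE.
- move=> k k' a; rewrite /Pr.
  pose h (om : msgs p K L * T) : msgs p K L * T :=
    ([ffun j => om.1 (swp k k' j)],
     [ffun i => om.2 i + (E k (om.1 k) i - E k' (om.1 k) i)]).
  have hi : injective h.
    move=> [w1 u1] [w2 u2] [] e1 e2.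
    have ew : w1 = w2.
      apply/ffunP => j; move/ffunP: e1 => /(_ (swp k k' j)).
      by rewrite !ffunE swpK.
    subst w2; congr (_, _); apply/ffunP => i; move/ffunP: e2 => /(_ i).
    by rewrite !ffunE => /addIr.
  rewrite [RHS](reindex_inj hi) /=; apply: eq_bigl => -[w u] /=.
  have Qu : Qf L x [ffun i => u i + (E k (w k) i - E k' (w k) i)] = Qf L x u.
    have -> : Qf L x [ffun i => u i + (E k (w k) i - E k' (w k) i)] =
      Qf L x (fun i => u i + (E k (w k) i + - E k' (w k) i)) by apply: Qf_ext => i; rewrite ffunE.
    by rewrite QfD QfD QfN /E !QE // subrr addr0.
  rewrite ffunE swpR; congr (_ == a); congr (_, _).
  apply/ffunP => n; rewrite !ffunE; apply/rowP => j; rewrite !ansE ffunE swpR.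
  rewrite /s Qu ffunE.
  by apply: alg_id.
Qed.


Lemma inj_x p N (D : 'I_N -> nat) : prime p -> (#|{: Idx N D}| < p)%N ->
  injective (fun i : Idx N D => ((enum_rank i : nat)%:R : 'F_p)).
Proof.
move=> pp lt i j /(congr1 val); rewrite /= !val_Fp_nat // !modn_small.
- by move/ord_inj/enum_rank_inj.
- exact: (ltn_trans (ltn_ord _) lt).
- exact: (ltn_trans (ltn_ord _) lt).
Qed.

Lemma mod_inj K M (K0 : (0 < K)%N) a (t1 t2 : nat) : (M <= K)%N -> (t1 < M)%N -> (t2 < M)%N ->
  ((a + t1) %% K = (a + t2) %% K)%N -> t1 = t2.
Proof.
move=> MK h1 h2 /eqP; rewrite eqn_modDl !modn_small; first by move/eqP.
all: lia.
Qed.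

Lemma ach_c (R : realType) (K N M : nat) : (0 < M)%N -> (M <= K)%N ->
  N = cdiv K M -> achievable K N M (1 / N%:R : R).
Proof.
move=> M0 MK eN.
have K0 : (0 < K)%N by apply: leq_trans MK.
pose f (n : 'I_N) (t : 'I_M) : 'I_K := Ordinal (ltn_pmod (n * M + t) K0).
pose S n := [set f n t | t in 'I_M].
pose D := fun _ : 'I_N => 1%N.
have [p plt pp] := prime_above #|{: Idx N D}|.
have srvP (k : 'I_K) : (k %/ M < N)%N.
  have h : ((k + M) %/ M <= (K + M.-1) %/ M)%N.
    apply: leq_div2r; have := ltn_ord k; lia.
  by rewrite divnDr ?dvdnn // divnn M0 addn1 -/(cdiv K M) -eN in h.
pose pos (k : 'I_K) (m : 'I_1) : Idx N D := existT _ (Ordinal (srvP k)) ord0.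
have cS n : #|S n| = M.
  rewrite card_imset ?card_ord // => t1 t2 /(congr1 val) /= /(mod_inj K0 MK (ltn_ord _) (ltn_ord _)).
  exact: ord_inj.
have := @lin_ach R K N M p 1 S D _ pos pp K0 cS (inj_x pp plt).
have -> : (\sum_(n < N) D n)%N = N by rewrite sum_nat_const card_ord muln1.
apply.
- by move=> k m1 m2 _; rewrite !ord1.
- move=> k m; rewrite /= /S; apply/imsetP; exists (Ordinal (ltn_pmod k M0)) => //.
  by apply: ord_inj; rewrite /= -divn_eq modn_small.
Qed.


Lemma lin_ach2 (R : realType) (K N M p L : nat) (S : 'I_N -> {set 'I_K})
  (D : 'I_N -> nat) (x : Idx N D -> 'F_p) :
  prime p -> (0 < K)%N -> (forall n, #|S n| = M) -> injective x ->
  (forall k, exists f : 'I_L -> Idx N D, injective f /\ forall m, k \in S (tag (f m))) ->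
  achievable K N M (L%:R / (\sum_n D n)%:R : R).
Proof.
move=> pp K0 cS xi H.
have H' k : exists f : {ffun 'I_L -> Idx N D}, injectiveb f && [forall m, k \in S (tag (f m))].
  have [f [fi fS]] := H k; exists (finfun f); apply/andP; split.
    by apply/injectiveP => m1 m2; rewrite !ffunE; apply: fi.
  by apply/forallP => m; rewrite ffunE.
pose pos k := xchoose (H' k).
apply: (@lin_ach R K N M p L S D x (fun k => pos k)) => // k.
  by have /andP[/injectiveP ? _] := xchooseP (H' k).
by move=> m; have /andP[_ /forallP ?] := xchooseP (H' k).
Qed.

Lemma div_lt (a c M : nat) : (0 < M)%N -> (a + M <= c)%N -> (a %/ M < c %/ M)%N.
Proof.
move=> M0 h; have := leq_div2r M h.
by rewrite divnDr ?dvdnn // divnn M0 addn1.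
Qed.

Definition fv (q1 N0 K' M n t : nat) : nat :=
  if (n < q1)%N then (n * M + t)%N
  else if (n < N0)%N then (q1 * M + ((n - q1) * M + t) %% K')%N else t.

Definition Dv (q1 N0 b n : nat) : nat :=
  if (n < q1)%N then b else if (n < N0)%N then 1%N else 0%N.

Lemma ach_MK (R : realType) (K N M : nat) : (0 < M)%N -> (M <= K)%N -> ~~ (M %| K)%N ->
  (K %/ gcdn K M - (M %/ gcdn K M - 1) * (K %/ M - 1) <= N)%N ->
  achievable K N M (M%:R / K%:R : R).
Proof.
move=> M0 MK nd HN.
have K0 : (0 < K)%N by apply: leq_trans MK.
set g := gcdn K M in HN *.
have g0 : (0 < g)%N by rewrite gcdn_gt0 M0 orbT.
set a := (K %/ g)%N in HN *; set b := (M %/ g)%N in HN *.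
have Ka : K = (a * g)%N by rewrite divnK ?dvdn_gcdl.
have Mb : M = (b * g)%N by rewrite divnK ?dvdn_gcdr.
set Q := (K %/ M)%N in HN *.
set q1 := (Q - 1)%N in HN *.
have q0 : (0 < Q)%N by rewrite divn_gt0.
have Kdec : K = (Q * M + K %% M)%N := divn_eq K M.
have r0 : (0 < K %% M)%N by rewrite lt0n; move: nd; rewrite /dvdn.
have b0 : (0 < b)%N by move: M0; rewrite Mb muln_gt0 => /andP[].
have QMM : (M <= Q * M)%N by rewrite leq_pmull.
have qbg : (q1 * b * g <= a * g)%N.
  rewrite -mulnA -Mb -Ka /q1 mulnBl mul1n; clear -Kdec; lia.
have qba : (q1 * b <= a)%N by rewrite -(leq_pmul2r g0).
have bq : (q1 <= b * q1)%N by rewrite leq_pmull.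
set r := (K %% M)%N in Kdec r0 *.
clearbody r Q a b g.
set K' := (K - q1 * M)%N.
have K'e : K' = (M + r)%N.
  rewrite /K' /q1 mulnBl mul1n; clear -Kdec QMM; lia.
have MK' : (M < K')%N by rewrite K'e -{1}(addn0 M) ltn_add2l.
have K'0 : (0 < K')%N by apply: leq_ltn_trans MK'.
set a' := (a - q1 * b)%N.
have K'a : K' = (a' * g)%N by rewrite /K' /a' mulnBl Ka Mb mulnA.
have a'M : (a' * M = b * K')%N by rewrite K'a Mb mulnCA.
set N0 := (q1 + a')%N.
have N0N : (N0 <= N)%N.
  move: HN; rewrite mulnBl mul1n /N0 /a'; clear -qba bq; lia.
pose D (n : 'I_N) := Dv q1 N0 b n.
have fvlt (n : 'I_N) (t : 'I_M) : (fv q1 N0 K' M n t < K)%N.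
  rewrite /fv; case: ifP => h1.
    have : (n.+1 * M <= q1 * M)%N by rewrite leq_mul2r h1 orbT.
    rewrite mulSn; have := ltn_ord t; lia.
  case: ifP => h2; last by have := ltn_ord t; lia.
  have := ltn_pmod ((n - q1) * M + t) K'0; lia.
pose f n t : 'I_K := Ordinal (fvlt n t).
pose S n := [set f n t | t in 'I_M].
have cS n : #|S n| = M.
  rewrite card_imset ?card_ord // => t1 t2 /(congr1 val); rewrite /= /fv.
  case: ifP => _; first by move/addnI/ord_inj.
  case: ifP => _; last by move/ord_inj.
  by move/addnI/(mod_inj K'0 (ltnW MK') (ltn_ord _) (ltn_ord _))/ord_inj.
have [p plt pp] := prime_above #|{: Idx N D}|.
have := @lin_ach2 R K N M p b S D _ pp K0 cS (inj_x pp plt).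
have -> : (\sum_n D n)%N = a.
  rewrite /D -(big_mkord xpredT (fun n => Dv q1 N0 b n)).
  have q1N : (q1 <= N0)%N by rewrite leq_addr.
  rewrite (big_cat_nat (n := q1)) //; last exact: leq_trans N0N.
  rewrite (big_cat_nat (n := N0) (m := q1)) //.
  rewrite (eq_big_nat _ _ (F2 := fun _ => b)); last first.
    by move=> i /andP[_ h]; rewrite /Dv h.
  rewrite (eq_big_nat _ _ (m := q1) (F2 := fun _ => 1%N)); last first.
    by move=> i /andP[h1 h2]; rewrite /Dv h2 ltnNge h1.
  rewrite (eq_big_nat _ _ (m := N0) (F2 := fun _ => 0%N)); last first.
    by move=> i /andP[h1 h2]; rewrite /Dv ltnNge (leq_trans q1N h1) /= ltnNge h1.
  rewrite !sum_nat_const_nat /=; rewrite /N0 /a' subn0 addKn muln0 addn0 muln1 mulnC.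
  by rewrite subnKC // mulnC.
have -> : (M%:R / K%:R : R) = b%:R / a%:R.
  by rewrite Ka Mb !natrM -mulf_div divff ?mulr1 // pnatr_eq0 -lt0n.
apply => k.
case: (ltnP k (q1 * M)) => hk.
  have hq : (k %/ M < q1)%N by rewrite ltn_divLR.
  have nN : (k %/ M < N)%N.
    by apply: (leq_trans hq); apply: leq_trans N0N; rewrite leq_addr.
  pose n : 'I_N := Ordinal nN.
  have Dn : b = D n by rewrite /D /Dv /= hq.
  exists (fun m => existT (fun n => 'I_(D n)) n (cast_ord Dn m)); split.
    by move=> m1 m2 /(congr1 (fun i => nat_of_ord (tagged i))) /= /ord_inj.
  move=> m /=; apply/imsetP; exists (Ordinal (ltn_pmod k M0)) => //.
  by apply: ord_inj; rewrite /= /fv /= hq -divn_eq.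
set rr := (k - q1 * M)%N.
have rlt : (rr < K')%N by rewrite /rr /K' ltn_sub2r // (leq_ltn_trans hk).
have ja (m : 'I_b) : ((rr + m * K') %/ M < a')%N.
  rewrite ltn_divLR // a'M; apply: (leq_trans (n := m.+1 * K')).
    by rewrite mulSn addnC [(K' + _)%N]addnC ltn_add2l.
  by rewrite leq_mul2r ltn_ord orbT.
have jlt (m : 'I_b) : (q1 + (rr + m * K') %/ M < N)%N.
  by apply: leq_trans N0N; rewrite /N0 ltn_add2l.
pose srv (m : 'I_b) : 'I_N := Ordinal (jlt m).
have Dsv m : (0 < D (srv m))%N.
  by rewrite /D /Dv /= [(q1 + _ < q1)%N]ltnNge leq_addr /= /N0 ltn_add2l ja.
have step (m1 m2 : nat) : (m1 < m2)%N -> (rr + m1 * K' + M <= rr + m2 * K')%N.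
  move=> lt; rewrite -addnA leq_add2l; apply: (leq_trans (n := m1 * K' + K')).
    by rewrite leq_add2l ltnW.
  by rewrite -mulSnr leq_mul2r lt orbT.
exists (fun m => existT (fun n => 'I_(D n)) (srv m) (Ordinal (Dsv m))); split.
  move=> m1 m2 /(congr1 (fun i => nat_of_ord (tag i))) /= /addnI e.
  apply: ord_inj.
  case: (ltngtP m1 m2) => // lt.
    have := div_lt M0 (step _ _ lt).
    by rewrite e ltnn.
  by have := div_lt M0 (step _ _ lt); rewrite e ltnn.
move=> m /=; apply/imsetP; exists (Ordinal (ltn_pmod (rr + m * K') M0)) => //.
apply: ord_inj; rewrite /= /fv /= [(q1 + _ < q1)%N]ltnNge leq_addr /= /N0 ltn_add2l ja addKn -divn_eq.
by rewrite [(rr + _)%N]addnC modnMDl modn_small // /rr subnKC.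
Qed.

Theorem theorem2 (R : realType) (K N M : nat) :
  (1 <= M)%N -> (M <= K)%N -> ~~ (M %| K)%N -> (cdiv K M <= N)%N ->
  ((K %/ gcdn K M - (M %/ gcdn K M - 1) * (K %/ M - 1) <= N)%N ->
      is_capacity K N M (M%:R / K%:R : R))
  /\
  (N = cdiv K M ->
      (forall r : R, achievable K N M r -> r <= 1 / (cdiv K M)%:R) /\
      is_capacity K N M (1 / (cdiv K M)%:R : R)).
Proof.
move=> M1 MK nd cN.
have K0 : (0 < K)%N by apply: leq_trans MK.
split.
  move=> HN; split; first exact: ach_MK.
  by move=> r; apply: conv_MK.
move=> eN.
have ub : forall r : R, achievable K N M r -> r <= 1 / (cdiv K M)%:R.
  by move=> r; rewrite -eN; apply: conv_c.
split => //; split => //.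
by rewrite -eN; apply: ach_c.
Qed.
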